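(* For integers $n\ge1$, $m\ge0$ let $d_{n,m}=\operatorname{Tr}(J_nB_n^{2m})$. Then $d_{n,0}=1+d_{n-1,0}=n$ (for $n\ge2$; $d_{1,0}=1$), $d_{1,m}=\delta_{0,m}$, and for $n\ge2$, $m\ge1$, $$d_{n,m}=d_{n-1,m}+\sum_{k=0}^{m-1}d_{n-1,k}\,d_{n,m-k-1}.$$
   Context: $J_n$ is the $n\times n$ all-ones matrix, and $B_n=i\,M$ where $M$ is the $n\times n$ matrix with zero diagonal, entries $1$ above and $-1$ below the diagonal ($B_1$ is the $1\times1$ zero matrix). $\delta$ is the Kronecker delta. *)

(* Defs.v *)
From HB Require Import structures.
From mathcomp Require Import all_boot all_order all_algebra all_field.
Set Implicit Arguments. Unset Strict Implicit. Unset Printing Implicit Defensive.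
Import Order.TTheory GRing.Theory Num.Theory.
Local Open Scope ring_scope.

Definition Jmx (n : nat) : 'M[algC]_n := const_mx 1.

Definition Mmx (n : nat) : 'M[algC]_n :=
  \matrix_(i, j) (if (i < j)%N then 1 else if (j < i)%N then -1 else 0).

Definition Bmx (n : nat) : 'M[algC]_n := 'i *: Mmx n.

Definition dnm (n m : nat) : algC := \tr (Jmx n *m (Bmx n) ^+ (2 * m)).

(* Main.v *)
Require Import Defs.
From HB Require Import structures.
From mathcomp Require Import all_boot all_order all_algebra all_field.
From mathcomp Require Import zify ring.
Import Order.TTheory GRing.Theory Num.Theory.
Local Open Scope ring_scope.

Definition Mf (i l : nat) : algC :=
  if (i < l)%N then 1 else if (l < i)%N then -1 else 0.

Fixpoint W (N j i : nat) : algC :=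
  match j with
  | 0 => 1
  | j.+1 => \sum_(l < N) 'i * Mf i l * W N j l
  end.

Definition Pn N j := \sum_(l < N) W N j l.

Lemma W_mx N j (i : 'I_N) : W N j i = \sum_(l < N) (Bmx N ^+ j) i l.
Proof.
elim: j i => [|j IH] i /=.
  rewrite expr0 (bigD1 i) //= big1 ?addr0; first by rewrite mxE eqxx.
  by move=> l /negbTE nl; rewrite mxE eq_sym nl.
rewrite exprS -mulmxE.
under [RHS]eq_bigr do rewrite mxE.
rewrite exchange_big /=; apply: eq_bigr => l _.
by rewrite IH mulr_sumr /Bmx /Mmx !mxE.
Qed.

Lemma dnm_Pn N m : dnm N m = Pn N (2 * m).
Proof.
rewrite /dnm /Pn /mxtrace.
under eq_bigr do rewrite mxE.
under eq_bigr do under eq_bigr do rewrite /Jmx mxE mul1r.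
rewrite exchange_big /=; apply: eq_bigr => l _.
by rewrite W_mx.
Qed.

Lemma trB N : (Bmx N)^T = - Bmx N.
Proof.
apply/matrixP => i j; rewrite !mxE.
case: (ltngtP i j) => //= _; rewrite ?mulrN ?mulr1 ?opprK ?mulr0 ?oppr0 //.
Qed.

Lemma trBX N p : (Bmx N ^+ p)^T = (-1) ^+ p *: Bmx N ^+ p.
Proof.
elim: p => [|p IH]; first by rewrite !expr0 scale1r trmx1.
rewrite exprSr -mulmxE trmx_mul IH trB.
rewrite -scalemxAr mulNmx mulmxE -exprS exprSr -scaleN1r scalerA.
by congr (_ *: _); rewrite [RHS]exprSr.
Qed.

Lemma Pn_odd N r : Pn N (2 * r).+1 = 0.
Proof.
have E : Pn N (2 * r).+1 = \sum_(l < N) \sum_(i < N) (Bmx N ^+ (2 * r).+1) l i.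
  by apply: eq_bigr => l _; rewrite W_mx.
have E2 : Pn N (2 * r).+1 = - Pn N (2 * r).+1.
  rewrite {1}E exchange_big /= E -sumrN; apply: eq_bigr => l _.
  rewrite -sumrN; apply: eq_bigr => i _.
  have H := congr1 (fun A : 'M[algC]_N => A i l) (trBX N (2 * r).+1).
  move: H; rewrite /= !mxE => ->.
  by rewrite -signr_odd /= oddM /= expr1 mulN1r opprK.
have : 2%:R * Pn N (2 * r).+1 = 0 by rewrite mulr2n mulrDl mul1r {1}E2 addNr.
by move/eqP; rewrite mulf_eq0 pnatr_eq0 /= => /eqP.
Qed.

Lemma Wx k j i : (i < k)%N ->
  W k.+1 j i = W k j i + 'i * \sum_(t < j) W k.+1 t k * W k (j - 1 - t) i.
Proof.
elim: j i => [|j IH] i ik; first by rewrite big_ord0 mulr0 addr0.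
rewrite [LHS]/= big_ord_recr /=.
have -> : Mf i k = 1 by rewrite /Mf ik.
under eq_bigr => l _ do rewrite IH // mulrDr.
rewrite big_split /= big_ord_recr /= subSS subn0 subnn.
have E : \sum_(t < j) W k.+1 t k * W k (j - t) i =
   \sum_(t < j) W k.+1 t k * \sum_(l < k) 'i * Mf i l * W k (j - 1 - t) l.
  apply: eq_bigr => t _; congr (_ * _).
  have -> : (j - t = (j - 1 - t).+1)%N by have := ltn_ord t; lia.
  by [].
rewrite E /=.
have F : \sum_(l < k) 'i * Mf i l * ('i * \sum_(t < j) W k.+1 t k * W k (j - 1 - t) l)
   = 'i * \sum_(t < j) W k.+1 t k * \sum_(l < k) 'i * Mf i l * W k (j - 1 - t) l.
  under eq_bigr do rewrite mulr_sumr mulr_sumr.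
  rewrite [RHS]mulr_sumr.
  under [RHS]eq_bigr do rewrite mulrA mulr_sumr.
  rewrite exchange_big /=; apply: eq_bigr => t _; apply: eq_bigr => l _.
  by ring.
rewrite F; ring.
Qed.

Lemma ii : 'i * 'i = -1 :> algC.
Proof. by rewrite -expr2 sqrCi. Qed.

Lemma Sk k j : \sum_(l < k) W k.+1 j l =
  Pn k j + 'i * \sum_(t < j) W k.+1 t k * Pn k (j - 1 - t).
Proof.
under eq_bigr => l _ do rewrite Wx //.
rewrite big_split /=; congr (_ + _).
rewrite -mulr_sumr; congr (_ * _).
rewrite exchange_big /=; apply: eq_bigr => t _.
by rewrite /Pn mulr_sumr.
Qed.

Lemma Yk k j : W k.+1 j.+1 k = - 'i * \sum_(l < k) W k.+1 j l.
Proof.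
rewrite /= big_ord_recr /= /Mf ltnn mulr0 mul0r addr0 mulr_sumr.
apply: eq_bigr => l _; rewrite ltnNge (ltnW (ltn_ord l)) /= ltn_ord.
by ring.
Qed.

Lemma Pk k j : Pn k.+1 j = \sum_(l < k) W k.+1 j l + W k.+1 j k.
Proof. by rewrite /Pn big_ord_recr. Qed.

Lemma Yid k j : \sum_(t < j) W k.+1 t k * Pn k (j - 1 - t) =
  W k.+1 j.+1 k + 'i * Pn k j.
Proof.
rewrite Yk Sk; set s := \sum_(t < j) _.
have -> : - 'i * (Pn k j + 'i * s) + 'i * Pn k j = - ('i * 'i) * s by ring.
by rewrite ii opprK mul1r.
Qed.

Lemma Pyy k b : Pn k.+1 b = W k.+1 b k + 'i * W k.+1 b.+1 k.
Proof.
rewrite Pk Yk mulrA.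
have -> : 'i * - 'i = - ('i * 'i) :> algC by ring.
by rewrite ii opprK mul1r addrC.
Qed.

Lemma mainrec k j : Pn k.+1 j.+2 =
  Pn k j.+2 + \sum_(b < j.+1) Pn k (j - b) * Pn k.+1 b.
Proof.
have A1 : \sum_(b < j.+1) Pn k (j - b) * W k.+1 b k = W k.+1 j.+2 k + 'i * Pn k j.+1.
  rewrite -Yid; apply: eq_bigr => b _; by rewrite subSS subn0 mulrC.
have A2 : \sum_(b < j.+1) Pn k (j - b) * W k.+1 b.+1 k =
          W k.+1 j.+3 k + 'i * Pn k j.+2 - Pn k j.+1.
  rewrite -(Yid k j.+2) [in RHS]big_ord_recl.
  have -> : W k.+1 (@ord0 j.+1) k = 1 by [].
  rewrite mul1r.
  have -> : (j.+2 - 1 - @ord0 j.+1 = j.+1)%N by [].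
  rewrite addrC addKr.
  apply: eq_bigr => b _; rewrite mulrC; congr (_ * _); congr (Pn k _).
have -> : \sum_(b < j.+1) Pn k (j - b) * Pn k.+1 b =
   \sum_(b < j.+1) Pn k (j - b) * W k.+1 b k +
   'i * \sum_(b < j.+1) Pn k (j - b) * W k.+1 b.+1 k.
  rewrite mulr_sumr -big_split; apply: eq_bigr => b _.
  by rewrite Pyy mulrDr mulrCA.
rewrite A1 A2 Pyy.
set p1 := Pn k j.+1; set p2 := Pn k j.+2; set y2 := W _ j.+2 k; set y3 := W _ j.+3 k.
have -> : p2 + (y2 + 'i * p1 + 'i * (y3 + 'i * p2 - p1)) = y2 + 'i * y3 + p2 + ('i * 'i) * p2 by ring.
rewrite ii; ring.
Qed.

Lemma even_sum (g : nat -> algC) p : (forall c, g (2 * c).+1 = 0) ->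
  \sum_(b < (2 * p).+1) g b = \sum_(c < p.+1) g (2 * c)%N.
Proof.
move=> Hg; elim: p => [|p IH]; first by rewrite !big_ord1.
have -> : ((2 * p.+1).+1 = (2 * p).+3)%N by lia.
rewrite big_ord_recr big_ord_recr /= IH Hg addr0 [in RHS]big_ord_recr /=.
by rewrite mulnS.
Qed.

Lemma Pn0 N : Pn N 0 = N%:R.
Proof. by rewrite /Pn /= sumr_const card_ord. Qed.

Theorem proposition5p1 :
  (forall n : nat, (2 <= n)%N -> dnm n 0 = 1 + dnm n.-1 0 /\ dnm n 0 = n%:R) /\
  dnm 1 0 = 1 /\
  (forall m : nat, dnm 1 m = (m == 0)%N%:R) /\
  (forall n m : nat, (2 <= n)%N -> (1 <= m)%N ->
     dnm n m = dnm n.-1 m + \sum_(k < m) dnm n.-1 k * dnm n (m - k - 1)%N).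
Proof.
split; [|split; [|split]].
- move=> n n2; rewrite !dnm_Pn !muln0 !Pn0; split => //.
  by case: n n2 => // n _; rewrite -natr1 addrC.
- by rewrite dnm_Pn muln0 Pn0.
- case=> [|m]; first by rewrite dnm_Pn muln0 Pn0.
  rewrite dnm_Pn mulnS /Pn big_ord1 /= big_ord1 /Mf /= mulr0 mul0r.
  by [].
- move=> [|[|k]] [|m] //= _ _.
  rewrite !dnm_Pn mulnS mainrec; congr (_ + _).
  rewrite (reindex_inj rev_ord_inj) /=.
  rewrite (eq_bigr (fun b : 'I_(2 * m).+1 => Pn k.+1 b * Pn k.+2 (2 * m - b))); last first.
    move=> b _; congr (_ * _); congr (Pn _ _); first by have := ltn_ord b; lia.
  rewrite (even_sum (fun b => Pn k.+1 b * Pn k.+2 (2 * m - b))); last first.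
    by move=> c; rewrite /= Pn_odd mul0r.
  apply: eq_bigr => c _; rewrite dnm_Pn dnm_Pn; congr (_ * _); congr (Pn _ _).
  by have := ltn_ord c; lia.
Qed.
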